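(* For $n\in\mathbb{N}$ let $f_n(z)=\big(\frac{z-1}{z+1}\big)^n$, $z\in\mathbb{C}_+$. Then $f_n\in\mathcal{B}$ and $\|f_n\|_{\mathcal{B}}\le3+2\log(2n)$ for each $n\in\mathbb{N}$.
   Context: $\mathbb{C}_+=\{\Re z>0\}$. $\mathcal{B}$ is the space of holomorphic $f$ on $\mathbb{C}_+$ with $\int_0^\infty\sup_{y}|f'(x+iy)|dx<\infty$, normed by $\|f\|_{\mathcal{B}}=\sup_{\mathbb{C}_+}|f|+\int_0^\infty\sup_{y\in\mathbb{R}}|f'(x+iy)|\,dx$. *)

(* Defs.v *)
From mathcomp Require Import all_boot all_order all_algebra.
From mathcomp Require Import all_classical all_reals all_analysis.
From mathcomp.real_closed Require Import complex.
Set Implicit Arguments.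
Unset Strict Implicit.
Unset Printing Implicit Defensive.
Import Order.TTheory GRing.Theory Num.Theory.
Import numFieldNormedType.Exports.
Local Open Scope classical_set_scope.
Local Open Scope ring_scope.

Section Hardy.
Variable R : realType.

Definition cabs (z : R[i]) : R :=
  Num.sqrt (complex.Re z ^+ 2 + complex.Im z ^+ 2).

Definition Cplus : set R[i] := [set z | 0 < complex.Re z].

(* f is holomorphic on D: complex differentiable at every point of D
   (derivable over the field R[i], i.e. complex derivative exists) *)
Definition holomorphic_on (f : R[i]^o -> R[i]^o) (D : set R[i]) : Prop :=
  forall z, D z -> derivable f z 1.

Definition cderiv (f : R[i]^o -> R[i]^o) (z : R[i]) : R[i] := 'D_1 f z.

Definition sup_abs_deriv (f : R[i]^o -> R[i]^o) (x : R) : \bar R :=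
  ereal_sup [set (cabs (cderiv f (Complex x y)))%:E | y in [set: R]].

Definition B_integral (f : R[i]^o -> R[i]^o) : \bar R :=
  (\int[@lebesgue_measure R]_(x in `]0%R, +oo[%classic) sup_abs_deriv f x)%E.

Definition sup_abs (f : R[i]^o -> R[i]^o) : \bar R :=
  ereal_sup [set (cabs (f z))%:E | z in Cplus].

Definition in_B (f : R[i]^o -> R[i]^o) : Prop :=
  holomorphic_on f Cplus /\ (B_integral f < +oo)%E.

Definition B_norm (f : R[i]^o -> R[i]^o) : \bar R :=
  (sup_abs f + B_integral f)%E.

Definition fn (n : nat) : R[i]^o -> R[i]^o :=
  fun z : R[i] => ((z - 1) / (z + 1)) ^+ n.

End Hardy.

(* Main.v *)
Require Import Defs.
From mathcomp Require Import all_boot all_order all_algebra.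
From mathcomp Require Import all_classical all_reals all_analysis.
From mathcomp.real_closed Require Import complex.
From mathcomp.algebra_tactics Require Import ring lra.
From mathcomp Require Import measurable_realfun.
Import Order.TTheory GRing.Theory Num.Theory.
Import numFieldNormedType.Exports.
Local Open Scope ring_scope.
Lemma subr_ge0_of (R : numDomainType) (a b : R) : a <= b -> 0 <= b - a.
Proof. by rewrite subr_ge0. Qed.
Section Real.
Variable R : realType.
Local Notation C := (R[i]).

Lemma bern (m : nat) (p q : R) : 0 <= p -> p <= q ->
  m.+1%:R * p ^+ m * (q - p) <= q ^+ m.+1 - p ^+ m.+1.
Proof.
move=> p0 pq; elim: m => [|m IH]; first by rewrite !expr1 expr0 !mulr1 mul1r.
have hX : p ^+ m.+1 <= q ^+ m.+1 by rewrite lerXn2r // ?nnegrE // (le_trans p0).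
have hq : 0 <= q - p by rewrite subr_ge0.
have H1 := mulr_ge0 hq (subr_ge0_of _ _ _ hX).
have H2 := ler_wpM2l p0 IH.
rewrite -natr1 (exprS p m.+1) (exprS q m.+1) (exprS p m).
rewrite (exprS p m) in H2 H1.
nra.
Qed.

Lemma key1 (n : nat) (x p q : R) : (1 <= n)%N -> 0 < x -> 0 <= p -> 0 < q ->
  q ^+ 2 = p ^+ 2 + 4 * x -> (x + 1) ^+ 2 <= q ^+ 2 ->
  n%:R * (p / q) ^+ n.-1 * (2 / q ^+ 2) <= 2 * n%:R / (1 + x) ^+ 2.
Proof.
move=> n1 x0 p0 q0 hq hx.
have pq : p <= q.
  rewrite -(@ler_pXn2r _ 2) // ?nnegrE ?ltW //; nra.
have r1 : (p / q) ^+ n.-1 <= 1.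
  apply: exprn_ile1; first by rewrite divr_ge0 // ltW.
  by rewrite ler_pdivrMr // mul1r.
have r0 : 0 <= (p / q) ^+ n.-1 by rewrite exprn_ge0 // divr_ge0 // ltW.
have h2 : 2 / q ^+ 2 <= 2 / (1 + x) ^+ 2.
  rewrite ler_pM2l // lef_pV2 ?posrE ?exprn_gt0 //; first by rewrite addrC.
  by rewrite ltr_wpDr // ltW.
have n0 : 0 <= n%:R :> R by [].
have h20 : 0 <= 2 / q ^+ 2 by rewrite divr_ge0 // exprn_ge0 // ltW.
apply: (@le_trans _ _ (n%:R * 1 * (2 / (1 + x) ^+ 2))).
  by rewrite ler_pM // ?mulr_ge0 // ler_pM.
by rewrite mulr1 mulrA (mulrC n%:R).
Qed.

Lemma key2 (n : nat) (x p q : R) : (1 <= n)%N -> 0 < x -> 0 <= p -> 0 < q ->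
  q ^+ 2 = p ^+ 2 + 4 * x ->
  n%:R * (p / q) ^+ n.-1 * (2 / q ^+ 2) <= x^-1.
Proof.
case: n => [//|m] _ x0 p0 q0 hq /=.
have pq : p <= q.
  rewrite -(@ler_pXn2r _ 2) // ?nnegrE ?ltW //; nra.
have B := @bern m p q p0 pq.
have pm0 : 0 <= p ^+ m by rewrite exprn_ge0.
have qm0 : 0 < q ^+ m by rewrite exprn_gt0.
have hb0 : 0 <= m.+1%:R * p ^+ m * (q - p) by rewrite mulr_ge0 ?mulr_ge0 ?subr_ge0.
rewrite !exprS in B.
have hq1 : m.+1%:R * p ^+ m * (q - p) * (q + p) <= 2 * q ^+ m * q ^+ 2.
  set K := m.+1%:R * p ^+ m * (q - p) in hb0 B *.
  have pP : 0 <= p * p ^+ m by rewrite mulr_ge0.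
  have h1 : K * (q + p) <= K * (2 * q) by apply: ler_wpM2l => //; lra.
  have h2 : K * (2 * q) <= (q * q ^+ m) * (2 * q) by apply: ler_wpM2r; [rewrite mulr_ge0 // ltW|lra].
  apply: le_trans h1 (le_trans h2 _); rewrite le_eqVlt; apply/orP; left; apply/eqP; ring.
have hx' : x = (q ^+ 2 - p ^+ 2) / 4 by rewrite hq; field.
have e : x * (m.+1%:R * (p / q) ^+ m * (2 / q ^+ 2)) =
    (m.+1%:R * p ^+ m * (q - p) * (q + p)) / (2 * q ^+ m * q ^+ 2).
  rewrite expr_div_n {1}hx'; field.
  by rewrite gt_eqF // gt_eqF.
rewrite -(ler_pM2l x0) e mulfV ?gt_eqF //.
by rewrite ler_pdivrMr ?mul1r // !mulr_gt0 // exprn_gt0.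
Qed.

Definition gg (z : C) : C := (z - 1) * (z + 1)^-1.

Lemma is_derive_gg (z : C) : z + 1 != 0 ->
  is_derive (z : C^o) (1 : C^o) (gg : C^o -> C^o) (2 / (z + 1) ^+ 2).
Proof.
move=> z1.
have hp : is_derive (z : C^o) (1 : C^o) (fun y : C^o => (y + 1 : C^o)) 1.
  have := @is_deriveD C C^o C^o (fun y => y) (fun _ => 1) z 1 1 0 (is_derive_id _ _) (is_derive_cst _ _ _).
  by rewrite addr0.
have hm : is_derive (z : C^o) (1 : C^o) (fun y : C^o => (y - 1 : C^o)) 1.
  have := @is_deriveB C C^o C^o (fun y => y) (fun _ => 1) z 1 1 0 (is_derive_id _ _) (is_derive_cst _ _ _).
  by rewrite subr0.
have hv : is_derive (z : C^o) (1 : C^o) (fun y : C^o => (y + 1 : C^o)^-1) (- (z+1) ^- 2 * 1).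
  apply: DeriveDef.
    exact: (@derivableV C C^o (fun y : C^o => (y + 1 : C^o)) z 1 z1 (@ex_derive _ _ _ _ _ _ _ hp)).
  by rewrite (@deriveV C C^o (fun y : C^o => (y + 1 : C^o)) z 1 z1 (@ex_derive _ _ _ _ _ _ _ hp)) derive_val.
have := @is_deriveM _ _ (fun y : C^o => (y - 1 : C^o)) (fun y : C^o => (y + 1 : C^o)^-1) z 1 _ _ hm hv.
move=> H.
have H2 : is_derive (z:C^o) (1:C^o) (gg : C^o -> C^o) ((z - 1) *: (- (z + 1) ^- 2 * 1) + (z + 1)^-1%:A) := H.
apply: (is_derive_eq H2).
rewrite /GRing.scale /=. by field.
Qed.


Lemma is_derive_fn (n : nat) (z : C) : z + 1 != 0 ->
  is_derive (z : C^o) (1 : C^o) (fn n : C^o -> C^o) ((n%:R * gg z ^+ n.-1) * (2 / (z + 1) ^+ 2)).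
Proof.
move=> z1.
have H := @is_deriveX _ _ (gg : C^o -> C) n z 1 _ (@is_derive_gg z z1).
rewrite exprfctE in H.
exact: H.
Qed.

Lemma cabsE (w : C) : cabs w = Normc.normc w.
Proof. by case: w. Qed.

Lemma normcX (w : C) k : Normc.normc (w ^+ k) = Normc.normc w ^+ k.
Proof.
elim: k => [|k IH]; first by rewrite !expr0 Normc.normc1.
by rewrite !exprS Normc.normcM IH.
Qed.

Lemma normc_nat k : Normc.normc (k%:R : C) = k%:R.
Proof. by rewrite normcMn Normc.normc1. Qed.


Lemma normc_sq (w : C) : Normc.normc w ^+ 2 = complex.Re w ^+ 2 + complex.Im w ^+ 2.
Proof. by case: w => a b; rewrite /= sqr_sqrtr // addr_ge0 // sqr_ge0. Qed.

Lemma normc_ge0 (w : C) : 0 <= Normc.normc w.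
Proof. by case: w => a b; rewrite /= sqrtr_ge0. Qed.

Lemma pq_facts (x y : R) : 0 < x ->
  let p := Normc.normc (Complex x y - 1) in
  let q := Normc.normc (Complex x y + 1) in
  [/\ 0 <= p, 0 < q, q ^+ 2 = p ^+ 2 + 4 * x & (x + 1) ^+ 2 <= q ^+ 2].
Proof.
move=> x0 p q.
have hp : p ^+ 2 = (x - 1) ^+ 2 + y ^+ 2 by rewrite /p normc_sq /=; ring.
have hq : q ^+ 2 = (x + 1) ^+ 2 + y ^+ 2 by rewrite /q normc_sq /=; ring.
have q0 : 0 <= q by exact: normc_ge0.
split.
- exact: normc_ge0.
- rewrite lt_neqAle q0 andbT; apply/negP => /eqP q0'.
  move: hq; rewrite -q0' expr0n /=; nra.
- rewrite hp hq; ring.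
- rewrite hq; nra.
Qed.

Lemma bound_deriv (n : nat) (x y : R) : (1 <= n)%N -> 0 < x ->
  cabs (cderiv (fn n) (Complex x y)) <= Num.min (2 * n%:R / (1 + x) ^+ 2) x^-1.
Proof.
move=> n1 x0.
have [p0 q0 hq hx] := @pq_facts x y x0.
set z := Complex x y.
have z1 : z + 1 != 0.
  apply/negP => /eqP e; move: q0; rewrite e.
  by rewrite Normc.normc0 ltxx.
rewrite /cderiv (@derive_val _ _ _ _ _ _ _ (is_derive_fn n z z1)).
rewrite cabsE !Normc.normcM normcX /gg Normc.normcM !Normc.normcV normcX normc_nat.
have -> : Normc.normc (2 : C) = 2 by rewrite (normc_nat 2).
rewrite le_min; apply/andP; split.
- have := @key1 n x _ _ n1 x0 p0 q0 hq hx.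
  by rewrite !mulrA.
- have := @key2 n x _ _ n1 x0 p0 q0 hq.
  by rewrite !mulrA.
Qed.

Lemma bound_fn (n : nat) (z : C) : 0 < complex.Re z -> cabs (fn n z) <= 1.
Proof.
case: z => x y /= x0.
have [p0 q0 hq hx] := @pq_facts x y x0.
rewrite cabsE /fn normcX Normc.normcM Normc.normcV.
apply: exprn_ile1; first by rewrite divr_ge0 // ltW.
rewrite ler_pdivrMr // mul1r -(@ler_pXn2r _ 2) // ?nnegrE ?ltW //.
rewrite hq; lra.
Qed.
End Real.
Local Open Scope classical_set_scope.

Lemma le_integral_nm (R : realType) (D : set R) (f g : R -> \bar R) :
  (forall x, D x -> (0 <= f x)%E) -> (forall x, D x -> (f x <= g x)%E) ->
  (\int[@lebesgue_measure R]_(x in D) f x <= \int[@lebesgue_measure R]_(x in D) g x)%E.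
Proof.
move=> f0 fg.
have g0 : forall x, D x -> (0 <= g x)%E by move=> x Dx; exact: le_trans (f0 x Dx) (fg x Dx).
rewrite (ge0_integralE (@lebesgue_measure R) f0) (ge0_integralE (@lebesgue_measure R) g0) /=.
apply: ereal_sup_le => _ [h hf <-]; exists h => // x.
apply: le_trans (hf x) _.
rewrite /patch; case: ifP => // /[!inE] Dx; exact: fg.
Qed.

Section Int.
Variable R : realType.
Variable n : nat.
Hypothesis n1 : (1 <= n)%N.
Let F1 (x : R) : R := 2 * n%:R / (1 + x) ^+ 2.
Let H (x : R) : R := Num.min (F1 x) x^-1.

Lemma F1_cont (x : R) : 0 <= x -> {for x, continuous F1}.
Proof.
move=> x0.
have h : (1 + x) * (1 + x) != 0 by rewrite mulf_neq0 // gt_eqF // ltr_pwDl.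
have -> : F1 = fun y => 2 * n%:R * ((1 + y) * (1 + y))^-1.
  by apply/funext => y; rewrite /F1 expr2.
rewrite /continuous_at.
apply: cvgM; first exact: cvg_cst.
apply: cvgV => //.
apply: cvgM; (apply: cvgD; [exact: cvg_cst|exact: cvg_id]).
Qed.

Lemma H_cont (x : R) : 0 < x -> {for x, continuous H}.
Proof.
move=> x0; apply: continuous_min; first exact: F1_cont (ltW x0).
have hi := (@inv_continuous R x (lt0r_neq0 x0)). exact hi.
Qed.

Lemma H_meas : measurable_fun (`]0%R, +oo[ : set R) (EFin \o H).
Proof.
apply/measurable_EFinP; apply: open_continuous_measurable_fun.
  exact: interval_open.
by move=> x /[!inE] /=; rewrite in_itv /= andbT => /H_cont.
Qed.


Lemma int_inv (a b : R) : 0 < a -> a < b ->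
  (\int[@lebesgue_measure R]_(x in `[a, b]) (x^-1)%:E = (ln b)%:E - (ln a)%:E)%E.
Proof.
move=> a0 ab.
apply: continuous_FTC2 => //.
- apply: continuous_in_subspaceT => x /[!inE] /=; rewrite in_itv /= => /andP[ax _].
  have hi := (@inv_continuous R x (lt0r_neq0 (lt_le_trans a0 ax))). exact hi.
- split.
  + move=> x /[!in_itv] /= /andP[ax _].
    exact: (@ex_derive _ _ _ _ _ _ _ (is_derive1_ln (lt_trans a0 ax))).
  + apply: cvg_at_right_filter; exact: continuous_ln.
  + apply: cvg_at_left_filter; exact: continuous_ln (lt_trans a0 ab).
- move=> x /[!in_itv] /= /andP[ax _].
  by rewrite derive1E (@derive_val _ _ _ _ _ _ _ (is_derive1_ln (lt_trans a0 ax))).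
Qed.


Let G (x : R) : R := - (2 * n%:R) * (1 + x)^-1.

Lemma G_der (x : R) : 0 <= x -> is_derive x 1 G (F1 x).
Proof.
move=> x0.
have h1 : 1 + x != 0 by rewrite gt_eqF // ltr_pwDl.
have hp : is_derive x (1 : R) (fun y : R => 1 + y) 1.
  have := @is_deriveD R R R (fun _ => 1) (fun y => y) x 1 0 1 (is_derive_cst _ _ _) (is_derive_id _ _).
  by rewrite add0r.
have hv := @is_deriveV R (fun y : R => 1 + y) x 1 1 h1 hp.
have := @is_deriveM R R (fun _ => - (2 * n%:R)) (fun y : R => (1 + y)^-1) x 1 0 _ (is_derive_cst _ _ _) hv.
move=> H2; apply: (is_derive_eq H2).
rewrite /F1 /GRing.scale /= mulr0 addr0; field.
by [].
Qed.

Lemma F1_meas (b : R) : 0 <= b -> measurable_fun (`]b, +oo[ : set R) (EFin \o F1).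
Proof.
move=> b0; apply/measurable_EFinP; apply: open_continuous_measurable_fun.
  exact: interval_open.
move=> x /[!inE] /=; rewrite in_itv /= andbT => bx.
exact: F1_cont (le_trans b0 (ltW bx)).
Qed.

Lemma int_tail (b : R) : 0 < b ->
  (\int[@lebesgue_measure R]_(x in `]b, +oo[) (F1 x)%:E = (2 * n%:R / (1 + b))%:E)%E.
Proof.
move=> b0.
rewrite integral_itv_obnd_cbnd; last exact: F1_meas (ltW b0).
rewrite (@ge0_continuous_FTC2y R F1 G b 0).
- by rewrite sub0e /G -EFinN mulNr opprK.
- move=> x bx; rewrite /F1 divr_ge0 // ?sqr_ge0 //.
- apply: continuous_in_subspaceT => x /[!inE] /=; rewrite in_itv /= andbT => bx.
  exact: F1_cont (le_trans (ltW b0) bx).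
- rewrite -(mulr0 (- (2 * n%:R))).
  apply: cvgM; first exact: cvg_cst.
  apply/gtr0_cvgV0.
    by near=> y; rewrite ltr_pwDl //; near: y; exact: nbhs_pinfty_gt.
  apply: (@ger_cvgy _ _ _ _ (fun y => y)); last exact: cvg_id.
  by near=> y; rewrite lerDr.
- move=> x bx; have hh := (@ex_derive _ _ _ _ _ _ _ (@G_der _ (ltW (lt_trans b0 bx)))); exact hh.
- apply: cvg_at_right_filter.
  apply: differentiable_continuous; rewrite -derivable1_diffP.
  exact: (@ex_derive _ _ _ _ _ _ _ (@G_der _ (ltW b0))).
- move=> x /[!in_itv] /= /andP[bx _].
  by rewrite derive1E (@derive_val _ _ _ _ _ _ _ (@G_der _ (ltW (lt_trans b0 bx)))).
Unshelve. all: by end_near.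
Qed.


Lemma H_ge0 (x : R) : 0 < x -> 0 <= H x.
Proof.
move=> x0; rewrite /H le_min; apply/andP; split; last by rewrite invr_ge0 ltW.
by rewrite /F1 divr_ge0 // sqr_ge0.
Qed.

Lemma int_H : (\int[@lebesgue_measure R]_(x in `]0%R, +oo[) (H x)%:E <=
   (2 + 2 * ln (2 * n%:R))%:E)%E.
Proof.
set b := 2 * n%:R; set a := b^-1.
have b2 : 2 <= b by rewrite /b -{1}(mulr1 2) ler_pM2l // ler1n.
have b0 : 0 < b by apply: lt_le_trans b2.
have a0 : 0 < a by rewrite invr_gt0.
have ab : a < b.
  apply: (@lt_trans _ _ 1); last by apply: lt_le_trans b2; rewrite ltr1n.
  by rewrite invf_lt1 // (lt_le_trans _ b2) // ltr1n.
have e1 : (`]0%R, +oo[ : set R) = `]0%R, a[ `|` `[a, +oo[.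
  by rewrite (@itv_bndbnd_setU _ _ (BRight 0) (BLeft a) (BInfty _ false)) // bnd_simp.
have e2 : (`[a, +oo[ : set R) = `[a, b] `|` `]b, +oo[.
  by rewrite (@itv_bndbnd_setU _ _ (BLeft a) (BRight b) (BInfty _ false)) // bnd_simp ltW.
have H0 : forall x, (`]0%R, +oo[ : set R) x -> (0 <= (H x)%:E)%E.
  by move=> x /=; rewrite in_itv /= andbT => x0; rewrite lee_fin H_ge0.
rewrite e1 ge0_integral_setU //; first last.
- apply/disj_setPS => x [] /=; rewrite !in_itv /= andbT => /andP[_ xa] ax.
  by move: (lt_le_trans xa ax); rewrite ltxx.
- by rewrite -e1.
- by rewrite -e1; exact: H_meas.
rewrite e2 ge0_integral_setU //; first last.
- apply/disj_setPS => x [] /=; rewrite !in_itv /= andbT => /andP[_ xb] bx.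
  by move: (le_lt_trans xb bx); rewrite ltxx.
- move=> x Hx; apply: H0; rewrite e1; right; rewrite e2; exact: Hx.
- rewrite -e2; apply: measurable_funS H_meas => //.
  by rewrite e1; exact: subsetUr.
have I1 : (\int[@lebesgue_measure R]_(x in `]0%R, a[) (H x)%:E <= 1%:E)%E.
  have Ic : (\int[@lebesgue_measure R]_(x in `]0%R, a[) (cst b%:E x) = 1%:E)%E.
    rewrite integral_cst //.
    have lm := lebesgue_measure_itv (`]0%R, a[)%R.
    rewrite /= lte_fin a0 -EFinB subr0 in lm.
    transitivity (b%:E * a%:E)%E; first by congr (_ * _)%E; exact lm.
    by rewrite -EFinM /a mulfV // gt_eqF.
  rewrite -Ic; apply: le_integral_nm.
    by move=> x /=; rewrite in_itv /= => /andP[x0 _]; rewrite lee_fin H_ge0.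
  move=> x /=; rewrite in_itv /= => /andP[x0 _]; rewrite lee_fin /H.
  rewrite ge_min; apply/orP; left; rewrite /F1 /b ler_pdivrMr ?exprn_gt0 ?ltr_pwDl ?ltW //.
  have hx : 1 < (1 + x) ^+ 2 by nra.
  by rewrite ltr_pMr // mulr_gt0.
have I2 : (\int[@lebesgue_measure R]_(x in `[a, b]) (H x)%:E <= (ln b)%:E - (ln a)%:E)%E.
  rewrite -int_inv //; apply: le_integral_nm.
    move=> x /=; rewrite in_itv /= => /andP[ax _]; rewrite lee_fin H_ge0 //.
    exact: lt_le_trans ax.
  by move=> x _; rewrite lee_fin /H ge_min lexx orbT.
have I3 : (\int[@lebesgue_measure R]_(x in `]b, +oo[) (H x)%:E <= (b / (1 + b))%:E)%E.
  rewrite -int_tail //; apply: le_integral_nm.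
    move=> x /=; rewrite in_itv /= andbT => bx; rewrite lee_fin H_ge0 //.
    exact: lt_trans bx.
  by move=> x _; rewrite lee_fin /H ge_min lexx.
apply: le_trans (leeD I1 (leeD I2 I3)) _.
rewrite -!EFinD lee_fin /a lnV ?posrE //.
have hb1 : 0 < 1 + b by lra.
have : b / (1 + b) <= 1 by rewrite ler_pdivrMr // mul1r; lra.
lra.
Qed.
End Int.

Theorem lemma3p7 (R : realType) (n : nat) (hn : (1 <= n)%N) :
  in_B (@fn R n) /\
  (B_norm (@fn R n) <= (3 + 2 * ln (2 * n%:R) : R)%:E)%E.
Proof.
have hI : (B_integral (@fn R n) <= (2 + 2 * ln (2 * n%:R) : R)%:E)%E.
  apply: le_trans _ (@int_H R n hn).
  apply: le_integral_nm.
    move=> x _; apply: le_trans (_ : ((cabs (cderiv (fn n) (Complex x 0)))%:E <= _)%E).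
      by rewrite lee_fin /cabs sqrtr_ge0.
    by apply: ereal_sup_ubound; exists 0.
  move=> x /=; rewrite in_itv /= andbT => x0.
  apply: ge_ereal_sup => _ [y _ <-]; rewrite lee_fin.
  exact: bound_deriv.
have hS : (sup_abs (@fn R n) <= 1%:E)%E.
  apply: ge_ereal_sup => _ [z zC <-]; rewrite lee_fin.
  exact: bound_fn.
split; first split.
- move=> z zC.
  have z1 : z + 1 != 0.
    apply/negP => /eqP e.
    have : complex.Re (z + 1) = 0 by rewrite e.
    move: zC; rewrite /Cplus /=; case: z {e} => x y /= x0; lra.
  have hh := (@ex_derive _ _ _ _ _ _ _ (@is_derive_fn R n z z1)); exact hh.
- by apply: le_lt_trans hI _; rewrite ltry.
- apply: le_trans (leeD hS hI) _.
  by rewrite -EFinD lee_fin; lra.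
Qed.
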